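(* Assume the drift assumption and the perturbation assumption below, and let $f,c_0,\varphi_0$ be as constructed below. Given $\delta>0$, let $\lambda:\mathbb R^d\to\mathbb R$ be a smooth function with $|\lambda(z)|\le1$ for all $z$ and $\lambda(z)=1$ for $|z|\ge\delta$. If $L<\frac{c_0\varphi_0\sigma^2}{8}$, then with $c:=c_0\sigma^2/2$, for all $X,Y\in\mathbb R^{Nd}$, writing $Z=X-Y$ and $r^i=|Z^i|$, $$\sum_{i=1}^N\Big((r^i)^{-1}Z^i\cdot(b^i(X)-b^i(Y))f'(r^i)+2\sigma^2\lambda^2(Z^i)f''(r^i)\Big)\le N m(\delta)-c\sum_{i=1}^Nf(r^i),$$ where $m(\delta)=\frac{\sigma^2}{2}\sup_{0<r<\delta}\big(r\kappa(r)^-\big)+c_0\sigma^2\delta$ and $x^-=-\min\{x,0\}$.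
   Context: Let $N\ge1$, $d\ge1$, $\sigma>0$, $b:\mathbb R^d\to\mathbb R^d$, $\gamma^i:\mathbb R^{Nd}\to\mathbb R^d$ ($i=1,\dots,N$), and $b^i(x)=b(x^i)+\gamma^i(x)$ for $x=(x^1,\dots,x^N)\in\mathbb R^{Nd}$. When $Z^i=0$, the term $(r^i)^{-1}Z^i\cdot(b^i(X)-b^i(Y))f'(r^i)$ is taken to be $0$. Drift assumption: there is $\kappa:(0,\infty)\to\mathbb R$ with $\kappa(r)\le\inf\{-\frac{2}{\sigma^2}\frac{(x-y)\cdot(b(x)-b(y))}{|x-y|^2}: |x-y|=r\}$, continuous on $(0,\infty)$, bounded below on $(0,\infty)$, with $\liminf_{r\to\infty}\kappa(r)>0$. Perturbation assumption: $\sum_{i=1}^N|\gamma^i(x)-\gamma^i(y)|\le L\sum_{i=1}^N|x^i-y^i|$ for all $x,y$. Construction of $f,c_0,\varphi_0$: $\kappa(r)^-=\max\{-\kappa(r),0\}$; $R_0=\inf\{R\ge0:\kappa(r)\ge0\ \forall r\ge R\}$; $R_1=\inf\{R\ge R_0:\kappa(r)R(R-R_0)\ge16\ \forall r\ge R\}$; $\varphi(r)=\exp(-\frac14\int_0^r s\kappa(s)^-ds)$; $\Phi(r)=\int_0^r\varphi$; $I=\int_0^{R_1}\frac{\Phi(s)}{\varphi(s)}ds$; $c_0=1/I$; $\varphi_0=\exp(-\frac14\int_0^{R_0}s\kappa(s)^-ds)$; $\eta=\frac{\Phi(R_1)}{2\varphi(R_1)I}$; $g(r)=1-\frac1{2I}\int_0^r\frac{\Phi(s)}{\varphi(s)}ds$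 for $r\le R_1$, $g(r)=\frac12-\frac{\eta(r-R_1)}{1+4\eta(r-R_1)}$ for $r>R_1$; $f(r)=\int_0^r\varphi(s)g(s)\,ds$. *)

(* Defs.v *)
From Stdlib Require Import Reals.
From Coquelicot Require Import Coquelicot.
From mathcomp Require Import ssreflect ssrfun ssrbool eqtype ssrnat seq fintype bigop.

Set Implicit Arguments.
Unset Strict Implicit.
Local Open Scope R_scope.

Definition vec (d : nat) := 'I_d -> R.

Definition rsum (n : nat) (F : 'I_n -> R) : R := \big[Rplus/0]_(i < n) F i.

Definition vadd {d} (u v : vec d) : vec d := fun k => u k + v k.
Definition vsub {d} (u v : vec d) : vec d := fun k => u k - v k.
Definition dot {d} (u v : vec d) : R := rsum (fun k => u k * v k).
Definition vnorm {d} (u : vec d) : R := sqrt (dot u u).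
Definition ebasis {d} (k : 'I_d) : vec d := fun j => if j == k then 1 else 0.
Definition shift {d} (x : vec d) (t : R) (k : 'I_d) : vec d :=
  fun j => x j + t * ebasis k j.

Fixpoint dpart {d} (ks : seq 'I_d) (h : vec d -> R) : vec d -> R :=
  match ks with
  | nil => h
  | k :: ks' => fun x => Derive (fun t => dpart ks' h (shift x t k)) 0
  end.

Definition vcontinuous {d} (h : vec d -> R) : Prop :=
  forall x eps, 0 < eps -> exists del, 0 < del /\
    forall y, vnorm (vsub y x) < del -> Rabs (h y - h x) < eps.

Definition smooth {d} (h : vec d -> R) : Prop :=
  forall ks : seq 'I_d,
    vcontinuous (dpart ks h) /\
    (forall x k, ex_derive (fun t => dpart ks h (shift x t k)) 0).

Definition drift_assumption {d} (sigma : R) (b : vec d -> vec d) (kappa : R -> R) : Prop :=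
  (forall r, 0 < r -> forall x y : vec d, vnorm (vsub x y) = r ->
     kappa r <= - (2 / sigma ^ 2) * dot (vsub x y) (vsub (b x) (b y)) / (vnorm (vsub x y)) ^ 2)
  /\ (forall r, 0 < r -> continuous kappa r)
  /\ (exists m, forall r, 0 < r -> m <= kappa r)
  /\ (exists eps, 0 < eps /\ exists R0, forall r, R0 <= r -> 0 < r -> eps <= kappa r).

Definition perturbation_assumption {N d} (gamma : 'I_N -> ('I_N -> vec d) -> vec d) (L : R) : Prop :=
  forall x y : 'I_N -> vec d,
    rsum (fun i => vnorm (vsub (gamma i x) (gamma i y))) <= L * rsum (fun i => vnorm (vsub (x i) (y i))).

Definition kminus (kappa : R -> R) (s : R) : R :=
  if Rlt_dec 0 s then Rmax (- kappa s) 0 else 0.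

Definition R0c (kappa : R -> R) : R :=
  real (Glb_Rbar (fun R => 0 <= R /\ forall r, R <= r -> 0 < r -> 0 <= kappa r)).
Definition R1c (kappa : R -> R) : R :=
  real (Glb_Rbar (fun R => R0c kappa <= R /\
     forall r, R <= r -> 0 < r -> 16 <= kappa r * R * (R - R0c kappa))).

Definition phi (kappa : R -> R) (r : R) : R :=
  exp (- (1/4) * RInt (fun s => s * kminus kappa s) 0 r).
Definition Phi (kappa : R -> R) (r : R) : R := RInt (phi kappa) 0 r.
Definition Ic (kappa : R -> R) : R :=
  RInt (fun s => Phi kappa s / phi kappa s) 0 (R1c kappa).
Definition c0 (kappa : R -> R) : R := / Ic kappa.
Definition phi0 (kappa : R -> R) : R :=
  exp (- (1/4) * RInt (fun s => s * kminus kappa s) 0 (R0c kappa)).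
Definition eta (kappa : R -> R) : R :=
  Phi kappa (R1c kappa) / (2 * phi kappa (R1c kappa) * Ic kappa).
Definition gfun (kappa : R -> R) (r : R) : R :=
  if Rle_dec r (R1c kappa) then
    1 - / (2 * Ic kappa) * RInt (fun s => Phi kappa s / phi kappa s) 0 r
  else
    1/2 - eta kappa * (r - R1c kappa) / (1 + 4 * eta kappa * (r - R1c kappa)).
Definition ffun (kappa : R -> R) (r : R) : R :=
  RInt (fun s => phi kappa s * gfun kappa s) 0 r.

Definition m_delta (sigma : R) (kappa : R -> R) (delta : R) : R :=
  sigma ^ 2 / 2 * real (Lub_Rbar (fun v => exists r, 0 < r < delta /\ v = r * kminus kappa r))
  + c0 kappa * sigma ^ 2 * delta.

Definition bi {N d} (b : vec d -> vec d) (gamma : 'I_N -> ('I_N -> vec d) -> vec d)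
  (i : 'I_N) (x : 'I_N -> vec d) : vec d := vadd (b (x i)) (gamma i x).

Definition lhs_term {N d} (sigma : R) (kappa : R -> R) (b : vec d -> vec d)
  (gamma : 'I_N -> ('I_N -> vec d) -> vec d) (lam : vec d -> R)
  (X Y : 'I_N -> vec d) (i : 'I_N) : R :=
  let Z := vsub (X i) (Y i) in
  let r := vnorm Z in
  (if Req_EM_T r 0 then 0
   else / r * dot Z (vsub (bi b gamma i X) (bi b gamma i Y)) * Derive (ffun kappa) r)
  + 2 * sigma ^ 2 * (lam Z) ^ 2 * Derive (Derive (ffun kappa)) r.

(* Main.v *)
Require Import Defs.
From Stdlib Require Import Reals Lra Psatz Classical.
From Coquelicot Require Import Coquelicot.
From mathcomp Require Import ssreflect ssrfun ssrbool eqtype ssrnat seq fintype bigop.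
Local Open Scope R_scope.
Set Warnings "-notation-overridden -ambiguous-paths".
From HB Require Import structures.
HB.instance Definition _ := Monoid.isComLaw.Build R 0 Rplus (fun a b c => esym (Rplus_assoc a b c)) Rplus_comm Rplus_0_l.


Lemma glb_facts (E : R -> Prop) (a x0 : R) :
  (forall x, E x -> a <= x) -> E x0 ->
  a <= real (Glb_Rbar E) /\ (forall x, E x -> real (Glb_Rbar E) <= x) /\
  forall r, real (Glb_Rbar E) < r -> exists x, E x /\ x < r.
Proof.
move=> Hlb Hx0.
have [H1 H2] := Glb_Rbar_correct E.
case HG: (Glb_Rbar E) H1 H2 => [g| |] H1 H2 /=.
- split; [|split].
  + have := H2 (Rbar.Finite a). simpl. apply. move=> x Ex. simpl. by apply Hlb.
  + move=> x Ex. by have := H1 _ Ex.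
  + move=> r Hr. apply NNPP => Hn.
    have : Rbar_le r g.
      apply H2 => x Ex /=. apply Rnot_lt_le => Hxr. apply Hn. by exists x.
    simpl. lra.
- by have := H1 _ Hx0.
- have := H2 (Rbar.Finite a). simpl. move=> H; exfalso; apply H. move=> x Ex. simpl. by apply Hlb.
Qed.

Lemma ballR (x e y : R) : ball x e y <-> Rabs (y - x) < e.
Proof. by []. Qed.

Lemma cont_dom (F G : R -> R) x :
  continuous G x ->
  locally x (fun y => Rabs (F y - F x) <= Rabs (G y - G x)) ->
  continuous F x.
Proof.
move=> HG Hl. apply/filterlim_locally => e.
have H : locally x (fun y => ball (G x) e (G y)) by move/filterlim_locally: HG; apply.
eapply filter_imp; last exact: (filter_and _ _ H Hl).
move=> y [H1 H2]. apply/ballR. move/ballR: H1. lra.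
Qed.

Lemma Rmax0_lip a b : Rabs (Rmax a 0 - Rmax b 0) <= Rabs (a - b).
Proof.
rewrite /Rmax. case: Rle_dec; case: Rle_dec => H1 H2;
 rewrite /Rabs; repeat case: Rcase_abs; lra.
Qed.

Section Kappa.
Variable kappa : R -> R.
Hypothesis kcont : forall r, 0 < r -> continuous kappa r.
Variable m0 : R.
Hypothesis klow : forall r, 0 < r -> m0 <= kappa r.
Variables eps R0' : R.
Hypothesis Heps : 0 < eps.
Hypothesis kbig : forall r, R0' <= r -> 0 < r -> eps <= kappa r.

Notation R0 := (R0c kappa).
Notation R1 := (R1c kappa).

Lemma R0_facts : 0 <= R0 /\ forall r, R0 < r -> 0 <= kappa r.
Proof.
have := @glb_facts (fun R => 0 <= R /\ forall r, R <= r -> 0 < r -> 0 <= kappa r)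
   0 (Rmax R0' 0).
case.
- by move=> x [].
- split; first by apply Rmax_r.
  move=> r Hr Hr0. have := kbig r. have := Rmax_l R0' 0. move=> ? H. 
  have := H ltac:(lra) Hr0. lra.
move=> H1 [H2 H3]. rewrite /R0c. split => //.
move=> r Hr. have [x [[Hx0 Hx] Hxr]] := H3 r Hr. apply Hx; lra.
Qed.

Lemma R1_facts : R0 < R1 /\ forall r, R1 < r -> 16 <= kappa r * R1 * (R1 - R0).
Proof.
have [HR0 HR0k] := R0_facts.
set x0 := Rmax R0' (R0 + 1 + 16/eps).
have Hx0a := Rmax_l R0' (R0 + 1 + 16/eps).
have Hx0b := Rmax_r R0' (R0 + 1 + 16/eps).
have He16 : 0 < 16 / eps by apply Rdiv_lt_0_compat; lra.
have := @glb_facts (fun R => R0 <= R /\ forall r, R <= r -> 0 < r -> 16 <= kappa r * R * (R - R0))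
   R0 x0.
case.
- by move=> x [].
- split; first by rewrite /x0; lra.
  move=> r Hr Hr0. have Hk := kbig r ltac:(rewrite /x0 in Hr; lra) Hr0.
  have A : 16/eps <= x0 * (x0 - R0).
    rewrite /x0 in Hx0a Hx0b *. nra.
  have B : eps * (16 / eps) = 16 by field; lra.
  rewrite Rmult_assoc. rewrite -B. apply Rmult_le_compat; lra.
move=> H1 [H2 H3]. rewrite /R1c -/R0c.
set g := real _ in H1 H2 H3 *.
have key : forall r, g < r -> 16 <= kappa r * g * (g - R0).
  move=> r Hr. have Hk : 0 <= kappa r by apply HR0k; lra.
  apply NNPP => Hn. apply Rnot_le_lt in Hn.
  set k := kappa r in Hk Hn *.
  set D := 16 - k * g * (g - R0).
  have HD : 0 < D by rewrite /D; lra.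
  set Q := 2 * g - R0 + 1.
  have HQ : 0 < Q by rewrite /Q; lra.
  set e := Rmin (r - g) (Rmin 1 (D / (k * Q + 1))).
  have He1 : e <= r - g by apply Rmin_l.
  have He2 : e <= 1 by rewrite /e; have := Rmin_r (r - g) (Rmin 1 (D / (k * Q + 1))); have := Rmin_l 1 (D / (k * Q + 1)); lra.
  have He3 : e <= D / (k * Q + 1) by rewrite /e; have := Rmin_r (r - g) (Rmin 1 (D / (k * Q + 1))); have := Rmin_r 1 (D / (k * Q + 1)); lra.
  have HDQ : 0 < D / (k * Q + 1) by apply Rdiv_lt_0_compat; nra.
  have He0 : 0 < e by rewrite /e; repeat apply Rmin_glb_lt; lra.
  have [x [[Hx0 Hx] Hxr]] := H3 (g + e) ltac:(lra).
  have Hgx := H2 x (conj Hx0 Hx).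
  have := Hx r ltac:(lra) ltac:(lra).
  have E1 : x * (x - R0) - g * (g - R0) <= e * Q.
    have -> : x * (x - R0) - g * (g - R0) = (x - g) * (x + g - R0) by ring.
    apply Rmult_le_compat; rewrite /Q; lra.
  have E2 : k * (e * Q) < D.
    have E3 : e * (k * Q + 1) <= D.
      have := Rmult_le_compat_r (k * Q + 1) _ _ ltac:(nra) He3.
      have -> : D / (k * Q + 1) * (k * Q + 1) = D by field; nra.
      done.
    have E5 : e * (k * Q + 1) = k * (e * Q) + e by ring. lra.
  have E4 : k * (x * (x - R0) - g * (g - R0)) <= k * (e * Q) by apply Rmult_le_compat_l.
  move=> H16. rewrite /D in E2. rewrite -/k in H16. nra.
split => //.
have := key (g + 1) ltac:(lra).
move=> H. apply NNPP => Hn. have Hg : g = R0 by lra.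
rewrite Hg Rminus_diag Rmult_0_r in H. lra.
Qed.

Definition Mk := Rmax (- m0) 0.
Definition hk (s : R) := s * kminus kappa s.
Definition Hf (r : R) := RInt hk 0 r.

Lemma km_bounds s : 0 <= kminus kappa s <= Mk.
Proof.
rewrite /kminus /Mk. case: Rlt_dec => Hs /=.
- have ? := klow s Hs. split; first by apply Rmax_r.
  apply Rmax_le_compat; lra.
- have ? := Rmax_r (- m0) 0. lra.
Qed.

Lemma km_zero s : R0 < s -> kminus kappa s = 0.
Proof.
move=> Hs. have [H0 Hk] := R0_facts. have := Hk s Hs.
rewrite /kminus. case: Rlt_dec => Hs' ?; last by [].
rewrite Rmax_right //. lra.
Qed.

Lemma hk_nonneg s : 0 <= s -> 0 <= hk s.
Proof. move=> Hs. have := km_bounds s. rewrite /hk. nra. Qed.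

Lemma hk_cont s : continuous hk s.
Proof.
case: (Rtotal_order s 0) => [Hs|[Hs|Hs]].
- apply: (continuous_ext_loc _ (fun _ => 0)); last exact: continuous_const.
  apply: (locally_interval _ _ m_infty 0) => //= y _ Hy.
  rewrite /hk /kminus. case: Rlt_dec => ? /=; [lra|ring].
- subst s. apply: (cont_dom _ (fun y => Mk * y)).
  + apply: (continuous_mult (fun _ => Mk) (fun y => y)); [exact: continuous_const|exact: continuous_id].
  + apply: filter_forall => y. rewrite /hk.
    have -> : kminus kappa 0 = 0 by rewrite /kminus; case: Rlt_dec => ? /=; [lra|].
    rewrite !Rmult_0_r !Rminus_0_r !Rabs_mult.
    have := km_bounds y. have := Rabs_pos y. rewrite (Rabs_pos_eq Mk); last by rewrite /Mk; apply Rmax_r.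
    move=> H2 H3. rewrite (Rabs_pos_eq (kminus kappa y)); [nra|lra].
- have Hc : continuous (kminus kappa) s.
    apply: (cont_dom _ kappa); first by apply kcont.
    apply: (locally_interval _ _ 0 p_infty) => //= y Hy _.
    rewrite /kminus. case: Rlt_dec => H1; last lra. case: Rlt_dec => H2; last lra.
    have := Rmax0_lip (- kappa y) (- kappa s).
    have -> : - kappa y - - kappa s = - (kappa y - kappa s) by ring.
    by rewrite Rabs_Ropp.
  exact: (continuous_mult (fun y => y) (kminus kappa) s (continuous_id s) Hc).
Qed.

Lemma ex_RInt_cont (f : R -> R) a b : (forall x, continuous f x) -> ex_RInt f a b.
Proof. move=> H. apply: ex_RInt_continuous => z _. exact: H. Qed.

Lemma is_derive_int (f : R -> R) a x : (forall y, continuous f y) ->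
  is_derive (fun r => RInt f a r) x (f x).
Proof.
move=> H. apply: is_derive_RInt; last exact: H.
apply: filter_forall => y. apply: RInt_correct. exact: ex_RInt_cont.
Qed.

Lemma Chasles' (f : R -> R) a b c : (forall x, continuous f x) ->
  RInt f a c = RInt f a b + RInt f b c.
Proof.
move=> H. rewrite -(RInt_Chasles f a b c) //; exact: ex_RInt_cont.
Qed.

Lemma RInt_nonneg (f : R -> R) a b : a <= b -> (forall x, continuous f x) ->
  (forall x, a < x < b -> 0 <= f x) -> 0 <= RInt f a b.
Proof. move=> Hab Hc H. apply: RInt_ge_0 => //. exact: ex_RInt_cont. Qed.

Lemma RInt_mono (f g : R -> R) a b : a <= b -> (forall x, continuous f x) ->
  (forall x, continuous g x) ->
  (forall x, a < x < b -> f x <= g x) -> RInt f a b <= RInt g a b.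
Proof. move=> Hab Hf Hg H. apply: RInt_le => //; exact: ex_RInt_cont. Qed.

Lemma RInt_cst_le (f : R -> R) a b c : a <= b -> (forall x, continuous f x) ->
  (forall x, a < x < b -> f x <= c) -> RInt f a b <= c * (b - a).
Proof.
move=> Hab Hf H. have := RInt_mono f (fun _ => c) a b Hab Hf (fun x => continuous_const c x) H.
rewrite RInt_const /scal /= /mult /=. lra.
Qed.

Lemma RInt_cst_ge (f : R -> R) a b c : a <= b -> (forall x, continuous f x) ->
  (forall x, a < x < b -> c <= f x) -> c * (b - a) <= RInt f a b.
Proof.
move=> Hab Hf H. have := RInt_mono (fun _ => c) f a b Hab (fun x => continuous_const c x) Hf H.
rewrite RInt_const /scal /= /mult /=. lra.
Qed.

Lemma RInt_lin C a b : RInt (fun s => C * s) a b = C * (b * b - a * a) / 2.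
Proof.
apply: is_RInt_unique.
have -> : C * (b * b - a * a) / 2 = minus (C * b * b / 2) (C * a * a / 2).
  rewrite /minus /plus /opp /=. field.
apply: (is_RInt_derive (fun s => C * s * s / 2)).
- move=> x _. auto_derive => //. field.
- move=> x _. apply: (continuous_mult (fun _ => C) (fun y => y)); [exact: continuous_const|exact: continuous_id].
Qed.

Lemma hk_int a b : ex_RInt hk a b.
Proof. apply: ex_RInt_cont. exact: hk_cont. Qed.

Lemma Hf_deriv r : is_derive Hf r (hk r).
Proof. apply: is_derive_int. exact: hk_cont. Qed.

Lemma Hf_mono a b : 0 <= a <= b -> Hf a <= Hf b.
Proof.
move=> [Ha Hab]. rewrite /Hf (Chasles' hk 0 a b); last exact: hk_cont.
have := RInt_nonneg hk a b Hab hk_cont (fun x Hx => hk_nonneg x ltac:(lra)). lra.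
Qed.

Lemma Hf_const r : R0 <= r -> Hf r = Hf R0.
Proof.
move=> Hr. rewrite /Hf (Chasles' hk 0 R0 r); last exact: hk_cont.
rewrite (RInt_ext hk (fun _ => 0) R0 r).
- rewrite RInt_const /scal /= /mult /=. ring.
- move=> x. rewrite Rmin_left // Rmax_right // => Hx. rewrite /hk km_zero ?Rmult_0_r //; lra.
Qed.

Lemma Hf_nonneg r : 0 <= r -> 0 <= Hf r.
Proof. move=> Hr. have := Hf_mono 0 r ltac:(lra). rewrite /Hf RInt_point /zero /=. lra. Qed.

Notation ph := (phi kappa).
Notation Ph := (Phi kappa).
Notation p0 := (phi0 kappa).

Lemma phiE r : ph r = exp (- (1/4) * Hf r).
Proof. by []. Qed.

Lemma phi_deriv r : is_derive ph r (- (1/4) * hk r * ph r).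
Proof.
have H1 : is_derive (fun r => - (1/4) * Hf r) r (- (1/4) * hk r).
  have := is_derive_scal Hf r (- (1/4)) (hk r) (Hf_deriv r). by [].
have := is_derive_comp exp (fun r => - (1/4) * Hf r) r _ _ (is_derive_exp _) H1.
rewrite /scal /= /mult /=. by [].
Qed.

Lemma phi_cont r : continuous ph r.
Proof. apply: ex_derive_continuous. eexists. exact: phi_deriv. Qed.

Lemma phi_pos r : 0 < ph r.
Proof. rewrite phiE. apply exp_pos. Qed.

Lemma phi0E : p0 = ph R0.
Proof. by []. Qed.

Lemma phi_anti a b : 0 <= a <= b -> ph b <= ph a.
Proof.
move=> H. rewrite !phiE. have := Hf_mono a b H => ?.
destruct (Req_dec (Hf a) (Hf b)) as [E|E]; first by rewrite E; lra.
left. apply exp_increasing. lra.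
Qed.

Lemma phi_le1 r : 0 <= r -> ph r <= 1.
Proof.
move=> Hr. rewrite phiE. rewrite -[X in _ <= X]exp_0. have := Hf_nonneg r Hr => ?.
destruct (Req_dec (Hf r) 0) as [E|E]; first by rewrite E; right; f_equal; ring.
left. apply exp_increasing. lra.
Qed.

Lemma phi_tail r : R0 <= r -> ph r = p0.
Proof. move=> Hr. by rewrite phi0E !phiE Hf_const. Qed.

Lemma phi_ge0 r : 0 <= r -> p0 <= ph r.
Proof.
move=> Hr. have [HR0 _] := R0_facts.
case: (Rle_lt_dec r R0) => H.
- rewrite phi0E. apply phi_anti. lra.
- rewrite phi_tail; lra.
Qed.

Lemma p0_pos : 0 < p0.
Proof. rewrite phi0E. apply phi_pos. Qed.

Lemma p0_le1 : p0 <= 1.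
Proof. rewrite phi0E. apply phi_le1. by case: R0_facts. Qed.

Lemma Phi_deriv r : is_derive Ph r (ph r).
Proof. apply: is_derive_int. exact: phi_cont. Qed.

Lemma Phi_cont r : continuous Ph r.
Proof. apply: ex_derive_continuous. eexists. exact: Phi_deriv. Qed.

Lemma Phi_split a b : Ph b = Ph a + RInt ph a b.
Proof. rewrite /Phi. apply: Chasles'. exact: phi_cont. Qed.

Lemma Phi0 : Ph 0 = 0.
Proof. by rewrite /Phi RInt_point. Qed.

Lemma Phi_le r : 0 <= r -> Ph r <= r.
Proof.
move=> Hr. have := RInt_cst_le ph 0 r 1 Hr phi_cont (fun x Hx => phi_le1 x ltac:(lra)).
rewrite /Phi. lra.
Qed.

Lemma Phi_ge r : 0 <= r -> p0 * r <= Ph r.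
Proof.
move=> Hr. have := RInt_cst_ge ph 0 r p0 Hr phi_cont (fun x Hx => phi_ge0 x ltac:(lra)).
rewrite /Phi. lra.
Qed.

Lemma Phi_ge_phi r : 0 <= r -> r * ph r <= Ph r.
Proof.
move=> Hr. have := RInt_cst_ge ph 0 r (ph r) Hr phi_cont (fun x Hx => phi_anti x r ltac:(lra)).
rewrite /Phi. lra.
Qed.

Lemma Phi_nonneg r : 0 <= r -> 0 <= Ph r.
Proof. move=> Hr. have := Phi_ge r Hr. have := p0_pos. nra. Qed.

Lemma Phi_ratio s r : 0 <= s <= r -> Ph r * s <= Ph s * r.
Proof.
move=> [Hs Hsr]. rewrite (Phi_split s r).
have := RInt_cst_le ph s r (ph s) Hsr phi_cont (fun x Hx => phi_anti s x ltac:(lra)).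
have := Phi_ge_phi s Hs. nra.
Qed.

Definition q (s : R) := Ph s / ph s.
Notation I := (Ic kappa).
Notation et := (Defs.eta kappa).

Lemma q_cont s : continuous q s.
Proof.
apply: (continuous_mult Ph (fun x => / ph x)); first exact: Phi_cont.
apply: continuous_Rinv_comp; first exact: phi_cont.
have := phi_pos s. lra.
Qed.

Lemma q_nonneg s : 0 <= s -> 0 <= q s.
Proof.
move=> Hs. rewrite /q. have := Phi_nonneg s Hs. have := phi_pos s => *.
apply: Rdiv_le_0_compat => //.
Qed.

Lemma q_ge s : 0 <= s -> Ph s <= q s.
Proof.
move=> Hs. rewrite /q. have := Phi_nonneg s Hs. have := phi_pos s. have := phi_le1 s Hs => *.
apply/Rle_div_r => //. nra.
Qed.

Lemma IE : I = RInt q 0 R1.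
Proof. by []. Qed.

Lemma R0_nonneg : 0 <= R0.
Proof. by case: R0_facts. Qed.

Lemma R0R1 : R0 < R1.
Proof. by case: R1_facts. Qed.

Lemma I_pos : 0 < I.
Proof.
have HR0 := R0_nonneg. have HR1 := R0R1.
rewrite IE.
have := RInt_mono (fun s => p0 * s) q 0 R1 ltac:(lra) _ q_cont.
rewrite RInt_lin. have := p0_pos => Hp H.
have : p0 * (R1 * R1 - 0 * 0) / 2 <= RInt q 0 R1.
  apply: H.
  - move=> x. apply: (continuous_mult (fun _ => p0) (fun y => y)); [exact: continuous_const|exact: continuous_id].
  - move=> x Hx. have := Phi_ge x ltac:(lra). have := q_ge x ltac:(lra). lra.
have : 0 < p0 * (R1 * R1 - 0 * 0) / 2.
  apply: Rdiv_lt_0_compat; last lra. apply: Rmult_lt_0_compat => //. nra.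
lra.
Qed.

Lemma I_big r : R1 <= r -> Ph r * (R1 * R1 - R0 * R0) <= 2 * r * p0 * I.
Proof.
move=> Hr. have HR0 := R0_nonneg. have HR1 := R0R1. have Hp := p0_pos.
set C := Ph r / (r * p0).
have H1 : RInt (fun s => C * s) R0 R1 <= RInt q R0 R1.
  apply: RInt_mono; [lra| |exact: q_cont|].
  - move=> x. apply: (continuous_mult (fun _ => C) (fun y => y)); [exact: continuous_const|exact: continuous_id].
  - move=> x Hx. rewrite /q phi_tail; last lra. rewrite /C.
    have := Phi_ratio x r ltac:(lra).
    have Hr0 : 0 < r by lra.
    move=> H.
    have -> : Ph r / (r * p0) * x = (Ph r * x / r) / p0 by field; lra.
    apply Rmult_le_compat_r; first by left; apply Rinv_0_lt_compat.
    apply/Rle_div_l => //.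
have H2 : RInt q 0 R1 = RInt q 0 R0 + RInt q R0 R1 by apply: Chasles'; exact: q_cont.
have H3 : 0 <= RInt q 0 R0 by apply: RInt_nonneg => //; [exact: q_cont| move=> x Hx; apply: q_nonneg; lra].
rewrite RInt_lin in H1. rewrite -IE in H2.
have : C * (R1 * R1 - R0 * R0) / 2 <= I by lra.
rewrite /C. move=> H.
have Hr0 : 0 < r by lra.
have -> : Ph r * (R1 * R1 - R0 * R0) = 2 * r * p0 * (Ph r / (r * p0) * (R1 * R1 - R0 * R0) / 2) by field; lra.
apply Rmult_le_compat_l => //. nra.
Qed.

Lemma eta_nonneg : 0 <= et.
Proof.
rewrite /Defs.eta. have := I_pos. have := phi_pos R1. have := Phi_nonneg R1 ltac:(have := R0_nonneg; have := R0R1; lra).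
move=> *. apply: Rdiv_le_0_compat => //. nra.
Qed.

Lemma q_R1 : q R1 = 2 * I * et.
Proof. rewrite /q /Defs.eta. have := I_pos. have := phi_pos R1 => *. field. lra. Qed.

Lemma pw_cont (a : R) (f g : R -> R) x : (x <= a -> continuous f x) -> (a <= x -> continuous g x) ->
  f a = g a -> continuous (fun y => if Rle_dec y a then f y else g y) x.
Proof.
move=> Hf Hg Ha.
case: (Rtotal_order x a) => [Hx|[Hx|Hx]].
- apply: (continuous_ext_loc _ f); last by apply: Hf; lra.
  apply: (locally_interval _ _ m_infty a) => //= y _ Hy. by case: Rle_dec => // ?; lra.
- subst x. have Cf := Hf (Rle_refl a). have Cg := Hg (Rle_refl a).
  apply/filterlim_locally => e.
  have H1 : locally a (fun y => ball (f a) e (f y)) by move/filterlim_locally: Cf; apply.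
  have H2 : locally a (fun y => ball (g a) e (g y)) by move/filterlim_locally: Cg; apply.
  eapply filter_imp; last exact: (filter_and _ _ H1 H2).
  move=> y [Y1 Y2].
  simpl. destruct (Rle_dec a a) as [Haa|Hn]; last lra.
  destruct (Rle_dec y a) as [Hya|Hya] => //=. by rewrite Ha.
- apply: (continuous_ext_loc _ g); last by apply: Hg; lra.
  apply: (locally_interval _ _ a p_infty) => //= y Hy _. by case: Rle_dec => // ?; lra.
Qed.

Definition wf (s : R) := 2 * I * et / ((1 + 4 * et * (s - R1)) * (1 + 4 * et * (s - R1))).
Definition Wf (s : R) := - (I / 2) / (1 + 4 * et * (s - R1)).

Lemma Wf_deriv s : R1 <= s -> is_derive Wf s (wf s).
Proof.
move=> Hs. have := eta_nonneg => He.
have Hd : 0 < 1 + 4 * et * (s - R1) by nra.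
rewrite /Wf /wf. auto_derive; first lra. field. lra.
Qed.

Lemma wf_cont s : R1 <= s -> continuous wf s.
Proof.
move=> Hs. have := eta_nonneg => He.
have Hd : 0 < 1 + 4 * et * (s - R1) by nra.
apply: ex_derive_continuous. rewrite /wf. auto_derive. nra.
Qed.

Definition psi (s : R) := if Rle_dec s R1 then q s else wf s.

Lemma psi_cont s : continuous psi s.
Proof.
apply: pw_cont.
- move=> _. exact: q_cont.
- exact: wf_cont.
- rewrite q_R1 /wf. have -> : R1 - R1 = 0 by ring. field.
Qed.

Lemma psi_nonneg s : 0 <= s -> 0 <= psi s.
Proof.
move=> Hs. rewrite /psi. case: Rle_dec => H; first by apply q_nonneg.
have := eta_nonneg. have := I_pos => *. rewrite /wf.
have Hd : 0 < 1 + 4 * et * (s - R1) by nra.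
apply: Rdiv_le_0_compat; nra.
Qed.

Definition g2 (r : R) := 1 - / (2 * I) * RInt psi 0 r.

Lemma g2_deriv r : is_derive g2 r (- / (2 * I) * psi r).
Proof.
rewrite /g2. auto_derive.
- split; first by apply: ex_RInt_cont; exact: psi_cont.
  split => //. apply: filter_forall => y. apply/continuity_pt_filterlim. exact: psi_cont.
- ring.
Qed.

Lemma gfun_eq r : gfun kappa r = g2 r.
Proof.
have HR0 := R0_nonneg. have HR1 := R0R1. have HI := I_pos. have He := eta_nonneg.
rewrite /gfun /g2. case: Rle_dec => Hr /=.
- f_equal. f_equal. apply: RInt_ext => x Hx.
  rewrite /psi. case: Rle_dec => // H. exfalso. apply: H.
  have ? := Rmax_lub 0 r R1 ltac:(lra) Hr. lra.
- rewrite (Chasles' psi 0 R1 r psi_cont).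
  have -> : RInt psi 0 R1 = I.
    rewrite IE. apply: RInt_ext => x. rewrite Rmin_left; [|lra]. rewrite Rmax_right; [|lra].
    move=> Hx. rewrite /psi. case: Rle_dec => // ?; lra.
  have -> : RInt psi R1 r = Wf r - Wf R1.
    rewrite (RInt_ext psi wf).
    + apply: is_RInt_unique. apply: (is_RInt_derive Wf wf).
      * move=> x. rewrite Rmin_left; [|lra]. move=> Hx. apply: Wf_deriv. lra.
      * move=> x. rewrite Rmin_left; [|lra]. move=> Hx. apply: wf_cont. lra.
    + move=> x. rewrite Rmin_left; [|lra]. rewrite Rmax_right; [|lra].
      move=> Hx. rewrite /psi. case: Rle_dec => // ?; lra.
  rewrite /Wf. have Hd : 0 < 1 + 4 * et * (r - R1) by nra.
  have -> : R1 - R1 = 0 by ring. field. lra.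
Qed.

Lemma g_bounds r : 0 <= r -> 1/4 <= gfun kappa r <= 1.
Proof.
move=> Hr. have HR0 := R0_nonneg. have HR1 := R0R1. have HI := I_pos. have He := eta_nonneg.
rewrite /gfun. case: Rle_dec => H /=.
- have A : 0 <= RInt q 0 r by apply: RInt_nonneg => //; [exact: q_cont|move=> x Hx; apply: q_nonneg; lra].
  have B : 0 <= RInt q r R1 by apply: RInt_nonneg => //; [exact: q_cont|move=> x Hx; apply: q_nonneg; lra].
  have C : I = RInt q 0 r + RInt q r R1 by rewrite IE; apply: Chasles'; exact: q_cont.
  have D : / (2 * I) * RInt q 0 r <= 1/2.
    apply/(Rmult_le_reg_l (2 * I)); first lra.
    rewrite -Rmult_assoc Rinv_r; lra.
  have D' : 0 <= / (2 * I) * RInt q 0 r.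
    apply: Rmult_le_pos => //. left. apply: Rinv_0_lt_compat. lra.
  change (RInt (fun s => Ph s / ph s) 0 r) with (RInt q 0 r). lra.
- have Ht : 0 < r - R1 by lra.
  have Hd : 0 < 1 + 4 * et * (r - R1) by nra.
  have A : 0 <= et * (r - R1) / (1 + 4 * et * (r - R1)) by apply: Rdiv_le_0_compat; nra.
  have B : et * (r - R1) / (1 + 4 * et * (r - R1)) <= 1/4.
    apply/Rle_div_l => //. lra.
  lra.
Qed.

Lemma g2_cont r : continuous g2 r.
Proof. apply: ex_derive_continuous. eexists. exact: g2_deriv. Qed.

Lemma fint_cont s : continuous (fun s => ph s * gfun kappa s) s.
Proof.
apply: (continuous_ext (fun s => ph s * g2 s)); first by move=> x; rewrite gfun_eq.
exact: (continuous_mult ph g2 s (phi_cont s) (g2_cont s)).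
Qed.

Lemma Df r : Derive (ffun kappa) r = ph r * gfun kappa r.
Proof.
rewrite /ffun. apply: is_derive_unique. apply: (is_derive_int (fun s => ph s * gfun kappa s)).
exact: fint_cont.
Qed.

Lemma DDf r : Derive (Derive (ffun kappa)) r =
  - (1/4) * hk r * ph r * gfun kappa r + ph r * (- / (2 * I) * psi r).
Proof.
rewrite (Derive_ext _ (fun r => ph r * g2 r)); last by move=> t; rewrite Df gfun_eq.
apply: is_derive_unique.
have := is_derive_mult ph g2 r _ _ (phi_deriv r) (g2_deriv r) Rmult_comm.
rewrite /plus /mult /= gfun_eq. by [].
Qed.

Lemma f0 : ffun kappa 0 = 0.
Proof. by rewrite /ffun RInt_point. Qed.

Lemma f_bounds r : 0 <= r -> p0 * r / 4 <= ffun kappa r <= Ph r.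
Proof.
move=> Hr. split.
- rewrite /ffun. have H : forall x, 0 < x < r -> p0 / 4 <= ph x * gfun kappa x.
    move=> x Hx. have ? := g_bounds x ltac:(lra). have ? := phi_ge0 x ltac:(lra). have ? := p0_pos. nra.
  have E := RInt_cst_ge (fun s : R => ph s * gfun kappa s) 0 r (p0 / 4) Hr fint_cont H. lra.
- rewrite /ffun /Phi. apply: RInt_mono => //; [exact: fint_cont|exact: phi_cont|].
  move=> x Hx. have ? := g_bounds x ltac:(lra). have ? := phi_pos x. nra.
Qed.

Lemma Df_bounds r : 0 <= r -> 0 <= Derive (ffun kappa) r <= 1.
Proof.
move=> Hr. rewrite Df. have ? := g_bounds r Hr. have ? := phi_pos r. have ? := phi_le1 r Hr. nra.
Qed.

Lemma DDf_nonpos r : 0 <= r -> Derive (Derive (ffun kappa)) r <= 0.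
Proof.
move=> Hr. rewrite DDf. have ? := g_bounds r Hr. have ? := phi_pos r. have := hk_nonneg r Hr.
have ? := psi_nonneg r Hr. have ? := I_pos => HI. have : 0 < / (2 * I) by apply: Rinv_0_lt_compat; lra.
move=> *. 
have A : 0 <= hk r * ph r * gfun kappa r by apply: Rmult_le_pos; [apply: Rmult_le_pos|]; lra.
have B : 0 <= ph r * (/ (2 * I) * psi r) by apply: Rmult_le_pos; [|apply: Rmult_le_pos]; lra.
have -> : - (1/4) * hk r * ph r * gfun kappa r + ph r * (- / (2 * I) * psi r)
  = - (1/4) * (hk r * ph r * gfun kappa r) - ph r * (/ (2 * I) * psi r) by ring.
lra.
Qed.

Lemma DDf_small r : 0 <= r <= R1 ->
  Derive (Derive (ffun kappa)) r = - (1/4) * hk r * ph r * gfun kappa r - / (2 * I) * Ph r.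
Proof.
move=> Hr. rewrite DDf /psi. case: Rle_dec => H /=; last lra.
rewrite /q. have := phi_pos r => ?. field. have ? := I_pos. lra.
Qed.

Lemma c0E : c0 kappa = / I.
Proof. by []. Qed.

Lemma core (sigma delta S D l2 r : R) : 0 < sigma -> 0 < delta -> 0 <= r -> 0 <= S ->
  (0 < r < delta -> r * kminus kappa r <= S) -> 0 <= l2 <= 1 -> (delta <= r -> l2 = 1) ->
  (0 < r -> D <= - (sigma ^ 2 / 2) * kappa r * (r * r)) ->
  (if Req_EM_T r 0 then 0 else / r * D * Derive (ffun kappa) r)
   + 2 * sigma ^ 2 * l2 * Derive (Derive (ffun kappa)) r
  <= sigma ^ 2 / 2 * S + c0 kappa * sigma ^ 2 * delta - c0 kappa * sigma ^ 2 * ffun kappa r.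
Proof.
move=> Hs Hd Hr HS HSr Hl2 Hl2d HD.
have HI := I_pos. have Hc0 : 0 < c0 kappa by rewrite c0E; apply: Rinv_0_lt_compat.
have Hs2 : 0 < sigma ^ 2 by apply: pow_lt.
have HDD := DDf_nonpos r Hr. have HDf := Df_bounds r Hr.
have [Hf1 Hf2] := f_bounds r Hr. have HPh := Phi_le r Hr.
have Hm : 0 <= sigma ^ 2 / 2 * S + c0 kappa * sigma ^ 2 * delta.
  apply: Rplus_le_le_0_compat; apply: Rmult_le_pos; try lra; apply: Rmult_le_pos; lra.
case: Req_EM_T => Hr0 /=.
- subst r. rewrite f0. have ? : l2 * Derive (Derive (ffun kappa)) 0 <= 0 by nra.
  have ? : 0 <= 2 * sigma^2 * (- (l2 * Derive (Derive (ffun kappa)) 0)) by apply Rmult_le_pos; lra.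
  lra.
- have Hrp : 0 < r by lra.
  have HDr := HD Hrp.
  have E1 : / r * D = D / r by rewrite Rmult_comm.
  have E2 : D / r <= - (sigma ^ 2 / 2) * kappa r * r.
    apply/Rle_div_l => //. nra.
  rewrite E1.
  case: (Rlt_le_dec r delta) => Hrd.
  +
    have Hkm : - kappa r <= kminus kappa r.
      rewrite /kminus. case: Rlt_dec => ? /=; [apply Rmax_l|lra].
    have Hkm0 := km_bounds r.
    have HSr' := HSr (conj Hrp Hrd).
    have A : D / r * Derive (ffun kappa) r <= sigma ^ 2 / 2 * S.
      have A1 : D / r <= sigma ^ 2 / 2 * (r * kminus kappa r).
        have -> : sigma ^ 2 / 2 * (r * kminus kappa r) = - (sigma ^ 2 / 2) * kappa r * r + sigma ^ 2 / 2 * (r * (kminus kappa r + kappa r)) by ring.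
        have : 0 <= sigma ^ 2 / 2 * (r * (kminus kappa r + kappa r)).
          apply: Rmult_le_pos; first lra. apply: Rmult_le_pos; lra.
        lra.
      have A2 : sigma ^ 2 / 2 * (r * kminus kappa r) <= sigma ^ 2 / 2 * S by apply: Rmult_le_compat_l; lra.
      have A3 : 0 <= sigma ^ 2 / 2 * (r * kminus kappa r) by apply: Rmult_le_pos; [lra|apply: Rmult_le_pos; lra].
      case: (Rle_lt_dec 0 (D / r)) => A4; nra.
    have B : l2 * Derive (Derive (ffun kappa)) r <= 0 by nra.
    have C : c0 kappa * sigma ^ 2 * ffun kappa r <= c0 kappa * sigma ^ 2 * delta.
      apply: Rmult_le_compat_l; [|lra]. nra.
    nra.
  + rewrite (Hl2d Hrd) Rmult_1_r.
    case: (Rle_lt_dec r R1) => HR1.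
    * rewrite (DDf_small r (conj Hr HR1)) Df.
      have Hkk : 0 <= kappa r + kminus kappa r.
        rewrite /kminus. case: Rlt_dec => ? /=; last lra. have ? := Rmax_l (- kappa r) 0. lra.
      have Hg := g_bounds r Hr. have Hp := phi_pos r.
      have Hpg : 0 <= ph r * gfun kappa r by nra.
      have A : D / r * (ph r * gfun kappa r) <= - (sigma ^ 2 / 2) * kappa r * r * (ph r * gfun kappa r).
        by apply: Rmult_le_compat_r.
      have B : 0 <= sigma ^ 2 / 2 * r * (kappa r + kminus kappa r) * (ph r * gfun kappa r).
        apply: Rmult_le_pos => //. apply: Rmult_le_pos => //. nra.
      have C : c0 kappa * sigma ^ 2 * ffun kappa r <= c0 kappa * sigma ^ 2 * Ph r.
        apply: Rmult_le_compat_l => //. nra.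
      rewrite c0E in C Hm. rewrite c0E /hk.
      have E : 2 * sigma ^ 2 * (- (1 / 4) * (r * kminus kappa r) * ph r * gfun kappa r - / (2 * I) * Ph r)
        = - (sigma ^ 2 / 2) * r * kminus kappa r * (ph r * gfun kappa r) - / I * sigma ^ 2 * Ph r.
        field. lra.
      rewrite E. nra.
    * have [_ H16] := R1_facts. have K := H16 r HR1.
      have HR0 := R0_nonneg. have HR01 := R0R1.
      have Hk : 0 < kappa r.
        apply: NNPP => Hn. have : kappa r * R1 * (R1 - R0) <= 0.
          have : 0 < R1 * (R1 - R0) by nra. nra.
        lra.
      rewrite Df phi_tail; last lra.
      have Hg := g_bounds r Hr. have Hp0 := p0_pos.
      have A : D / r * (p0 * gfun kappa r) <= - (sigma ^ 2 / 2) * kappa r * r * (p0 / 4).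
        have : D / r * (p0 * gfun kappa r) <= - (sigma ^ 2 / 2) * kappa r * r * (p0 * gfun kappa r).
          apply: Rmult_le_compat_r => //. nra.
        have : sigma ^ 2 / 2 * kappa r * r * (p0 / 4) <= sigma ^ 2 / 2 * kappa r * r * (p0 * gfun kappa r).
          apply: Rmult_le_compat_l; [|nra]. apply: Rmult_le_pos; [|lra]. apply: Rmult_le_pos; lra.
        lra.
      have B : 2 * sigma ^ 2 * Derive (Derive (ffun kappa)) r <= 0 by nra.
      have C := I_big r ltac:(lra).
      (* c0 * f <= c0 * Ph r <= 2 r p0 / (R1^2 - R0^2) <= r p0 kappa / 8 *)
      have C1 : c0 kappa * ffun kappa r <= c0 kappa * Ph r by apply: Rmult_le_compat_l; lra.
      have C2 : c0 kappa * Ph r * (R1 * R1 - R0 * R0) <= 2 * r * p0.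
        rewrite c0E. have -> : / I * Ph r * (R1 * R1 - R0 * R0) = (Ph r * (R1 * R1 - R0 * R0)) / I by field; lra.
        apply/Rle_div_l => //.
      have C3 : 2 * r * p0 * 8 <= r * p0 * kappa r * (R1 * R1 - R0 * R0).
        have : 16 <= kappa r * (R1 * R1 - R0 * R0).
          have : R1 * (R1 - R0) <= R1 * R1 - R0 * R0 by nra. nra.
        have : 0 < r * p0 by nra. nra.
      have C4 : c0 kappa * Ph r * 8 <= r * p0 * kappa r.
        have HRR : 0 < R1 * R1 - R0 * R0 by nra.
        apply: (Rmult_le_reg_r (R1 * R1 - R0 * R0)) => //. nra.
      have C5 : c0 kappa * sigma ^ 2 * ffun kappa r <= sigma ^ 2 * (r * p0 * kappa r) / 8 by nra.
      nra.
Qed.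

End Kappa.

Lemma rsum_le {n} (F G : 'I_n -> R) : (forall i, F i <= G i) -> rsum F <= rsum G.
Proof.
elim: n F G => [|n IH] F G H; rewrite /rsum ?big_ord0; first lra.
rewrite !big_ord_recr /=. apply: Rplus_le_compat; last exact: H.
exact: (IH (fun i => F (widen_ord (leqnSn n) i)) (fun i => G (widen_ord (leqnSn n) i))).
Qed.

Lemma rsum_plus {n} (F G : 'I_n -> R) : rsum (fun i => F i + G i) = rsum F + rsum G.
Proof.
elim: n F G => [|n IH] F G; rewrite /rsum ?big_ord0; first ring.
rewrite !big_ord_recr /=.
have := IH (fun i => F (widen_ord (leqnSn n) i)) (fun i => G (widen_ord (leqnSn n) i)).
rewrite /rsum => ->. set A := \big[Rplus/0]_(i < n) F _. set B := \big[Rplus/0]_(i < n) G _. ring.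
Qed.

Lemma rsum_scal {n} c (F : 'I_n -> R) : rsum (fun i => c * F i) = c * rsum F.
Proof.
elim: n F => [|n IH] F; rewrite /rsum ?big_ord0; first ring.
rewrite !big_ord_recr /=.
have := IH (fun i => F (widen_ord (leqnSn n) i)).
rewrite /rsum => ->. set A := \big[Rplus/0]_(i < n) F _. ring.
Qed.

Lemma rsum_const {n} c : rsum (fun _ : 'I_n => c) = INR n * c.
Proof.
elim: n => [|n IH]; first by rewrite /rsum big_ord0 /=; ring.
rewrite /rsum big_ord_recr S_INR. rewrite /rsum in IH. rewrite IH /=. ring.
Qed.

Lemma rsum_ext {n} (F G : 'I_n -> R) : (forall i, F i = G i) -> rsum F = rsum G.
Proof. move=> H. rewrite /rsum. apply: eq_bigr => i _. exact: H. Qed.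

Lemma rsum_nonneg {n} (F : 'I_n -> R) : (forall i, 0 <= F i) -> 0 <= rsum F.
Proof.
move=> H. have := @rsum_le _ (fun _ => 0) F H. rewrite rsum_const. lra.
Qed.

Lemma dot_nonneg {d} (u : vec d) : 0 <= dot u u.
Proof. apply: rsum_nonneg => i. apply: Rle_0_sqr. Qed.

Lemma vnorm_nonneg {d} (u : vec d) : 0 <= vnorm u.
Proof. apply: sqrt_pos. Qed.

Lemma vnorm_sq {d} (u : vec d) : vnorm u * vnorm u = dot u u.
Proof. rewrite /vnorm sqrt_sqrt //. exact: dot_nonneg. Qed.

Lemma dot_add {d} (u v w : vec d) : dot u (vadd v w) = dot u v + dot u w.
Proof. rewrite /dot -rsum_plus. apply: rsum_ext => i. rewrite /vadd. ring. Qed.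

Lemma dot_ext {d} (u v w : vec d) : (forall k, v k = w k) -> dot u v = dot u w.
Proof. move=> H. apply: rsum_ext => i. by rewrite H. Qed.

Lemma dot_am {d} (u v : vec d) a : 0 < a -> 2 * dot u v <= a * dot u u + / a * dot v v.
Proof.
move=> Ha. rewrite /dot -!rsum_scal -rsum_plus. apply: rsum_le => i.
have H : 0 <= (a * u i - v i) * (a * u i - v i) by apply: Rle_0_sqr.
have Hia : 0 < / a by apply: Rinv_0_lt_compat.
have := Rmult_le_compat_l (/ a) _ _ (Rlt_le _ _ Hia) H.
have -> : / a * ((a * u i - v i) * (a * u i - v i)) = a * (u i * u i) + / a * (v i * v i) - 2 * (u i * v i).
  field. lra.
rewrite Rmult_0_r. lra.
Qed.

Lemma CS {d} (u v : vec d) : 0 < vnorm u -> dot u v <= vnorm u * vnorm v.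
Proof.
move=> Hu. have Hv := vnorm_nonneg v.
have HU := vnorm_sq u. have HV := vnorm_sq v.
case: (Req_dec (vnorm v) 0) => Hv0.
- apply: Rnot_lt_le => Hn. rewrite Hv0 Rmult_0_r in Hn.
  have Hp : 0 < dot u v / (dot u u + 1).
    apply: Rdiv_lt_0_compat => //. have := dot_nonneg u. lra.
  have := dot_am u v _ Hp. rewrite -HV Hv0 Rmult_0_r Rmult_0_r Rplus_0_r.
  have : dot u v / (dot u u + 1) * dot u u < dot u v.
    have := dot_nonneg u => H0.
    have -> : dot u v / (dot u u + 1) * dot u u = dot u v * (dot u u / (dot u u + 1)) by field; lra.
    have : dot u u / (dot u u + 1) < 1 by apply/Rlt_div_l; lra.
    nra.
  lra.
- have Hvp : 0 < vnorm v by lra.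
  have Ha : 0 < vnorm v / vnorm u by apply: Rdiv_lt_0_compat.
  have := dot_am u v _ Ha.
  rewrite -HU -HV.
  have -> : vnorm v / vnorm u * (vnorm u * vnorm u) + / (vnorm v / vnorm u) * (vnorm v * vnorm v)
     = 2 * (vnorm u * vnorm v) by field; lra.
  lra.
Qed.

Lemma lubS (kappa : R -> R) m0 (klow : forall r, 0 < r -> m0 <= kappa r) delta : 0 < delta ->
  0 <= real (Lub_Rbar (fun v => exists r, 0 < r < delta /\ v = r * kminus kappa r)) /\
  forall r, 0 < r < delta ->
    r * kminus kappa r <= real (Lub_Rbar (fun v => exists r, 0 < r < delta /\ v = r * kminus kappa r)).
Proof.
move=> Hd.
set E := fun v => exists r, 0 < r < delta /\ v = r * kminus kappa r.
have [H1 H2] := Lub_Rbar_correct E.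
have HE : E (delta / 2 * kminus kappa (delta / 2)) by exists (delta / 2); split => //; lra.
have Hb : forall v, E v -> 0 <= v <= delta * Mk m0.
  move=> v [r [Hr ->]]. have := @km_bounds kappa m0 klow r. move=> ?. split; nra.
case HL: (Lub_Rbar E) H1 H2 => [s| |] H1 H2 /=.
- have := H1 _ HE. rewrite /= => Hs. have := Hb _ HE. move=> ?. split; first lra.
  move=> r Hr. have : E (r * kminus kappa r) by exists r. move/H1. by [].
- exfalso. have := H2 (Rbar.Finite (delta * Mk m0)). rewrite /=. apply.
  move=> v Ev /=. exact: (proj2 (Hb v Ev)).
- exfalso. have := H1 _ HE. by [].
Qed.

Theorem lemma2 (N d : nat) (sigma : R) (b : vec d -> vec d)
  (gamma : 'I_N -> ('I_N -> vec d) -> vec d) (kappa : R -> R) (L delta : R)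
  (lam : vec d -> R) :
  (0 < N)%nat -> (0 < d)%nat -> 0 < sigma ->
  drift_assumption sigma b kappa ->
  perturbation_assumption gamma L ->
  0 < delta ->
  smooth lam ->
  (forall z, Rabs (lam z) <= 1) ->
  (forall z, delta <= vnorm z -> lam z = 1) ->
  L < c0 kappa * phi0 kappa * sigma ^ 2 / 8 ->
  forall X Y : 'I_N -> vec d,
    rsum (lhs_term sigma kappa b gamma lam X Y)
    <= INR N * m_delta sigma kappa delta
       - (c0 kappa * sigma ^ 2 / 2) * rsum (fun i => ffun kappa (vnorm (vsub (X i) (Y i)))).
Proof.
move=> HN Hd Hs [Hdr [Hc [[m0 Hm0] [eps [Heps [R0' HR0']]]]]] Hpert Hdel _ Hlam1 Hlamd HL X Y.
have HI := @I_pos kappa Hc _ Hm0 _ _ Heps HR0'.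
have Hc0 : 0 < c0 kappa by apply: Rinv_0_lt_compat.
have Hp0 := p0_pos kappa.
have Hs2 : 0 < sigma ^ 2 by apply: pow_lt.
have [HS HSr] := @lubS kappa m0 Hm0 delta Hdel.
set S := real _ in HS HSr.
set M := sigma ^ 2 / 2 * S + c0 kappa * sigma ^ 2 * delta.
set rr := fun i => vnorm (vsub (X i) (Y i)).
set ff := fun i => ffun kappa (rr i).
set ww := fun i => vnorm (vsub (gamma i X) (gamma i Y)).
have Hterm : forall i, lhs_term sigma kappa b gamma lam X Y i <= M - c0 kappa * sigma ^ 2 * ff i + ww i.
  move=> i. rewrite /lhs_term /ff /ww /rr /=.
  set Z := vsub (X i) (Y i).
  set r := vnorm Z.
  set Db := dot Z (vsub (b (X i)) (b (Y i))).
  set w := vsub (gamma i X) (gamma i Y).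
  have Edot : dot Z (vsub (bi b gamma i X) (bi b gamma i Y)) = Db + dot Z w.
    rewrite /Db -dot_add. apply: dot_ext => k. rewrite /vsub /vadd /bi /w /vadd /vsub /=. lra.
  rewrite Edot.
  have Hr : 0 <= r by apply: vnorm_nonneg.
  have Hl2 : 0 <= lam Z ^ 2 <= 1.
    have E : lam Z ^ 2 = Rabs (lam Z) * Rabs (lam Z).
      rewrite -Rabs_mult Rabs_pos_eq /=; first ring.
      have := Rle_0_sqr (lam Z). rewrite /Rsqr. lra.
    have H := Hlam1 Z. have H0 := Rabs_pos (lam Z). rewrite E. split; nra.
  have Hl2d : delta <= r -> lam Z ^ 2 = 1 by move=> H; rewrite Hlamd //; ring.
  have HD : 0 < r -> Db <= - (sigma ^ 2 / 2) * kappa r * (r * r).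
    move=> Hr0. have H1 := Hdr r Hr0 (X i) (Y i) erefl.
    rewrite -/Z -/r -/Db in H1.
    have E : - (2 / sigma ^ 2) * Db / r ^ 2 = (- 2 * Db) / (sigma ^ 2 * (r * r)) by field; lra.
    rewrite E in H1.
    have Hpos : 0 < sigma ^ 2 * (r * r) by apply: Rmult_lt_0_compat => //; nra.
    move/Rle_div_r: H1 => /(_ Hpos) H1.
    have -> : - (sigma ^ 2 / 2) * kappa r * (r * r) = - (kappa r * (sigma ^ 2 * (r * r))) / 2 by field.
    lra.
  have Hcore := @core kappa Hc _ Hm0 _ _ Heps HR0' _ _ _ _ _ _ Hs Hdel Hr HS (HSr r) Hl2 Hl2d HD.
  have Hw : (if Req_EM_T r 0 then 0 else / r * (Db + dot Z w) * Derive (ffun kappa) r)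
     <= (if Req_EM_T r 0 then 0 else / r * Db * Derive (ffun kappa) r) + vnorm w.
    case: Req_EM_T => Hr0 /=; first by have := vnorm_nonneg w; lra.
    have Hrp : 0 < r by lra.
    have Hcs := @CS _ Z w Hrp.
    have HDf := @Df_bounds kappa Hc _ Hm0 _ _ Heps HR0' _ Hr.
    have Hnw := vnorm_nonneg w.
    have E : / r * (Db + dot Z w) * Derive (ffun kappa) r
       = / r * Db * Derive (ffun kappa) r + (dot Z w / r) * Derive (ffun kappa) r by field; lra.
    rewrite E.
    have : dot Z w / r <= vnorm w by apply/Rle_div_l => //; rewrite Rmult_comm.
    move=> H. have : dot Z w / r * Derive (ffun kappa) r <= vnorm w.
      case: (Rle_lt_dec 0 (dot Z w / r)) => H0; nra.
    lra.
  rewrite /M. lra.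
have Hsum := rsum_le _ _ Hterm.
set c := c0 kappa * sigma ^ 2.
have Hc' : 0 < c by rewrite /c; apply: Rmult_lt_0_compat.
have E : rsum (fun i => M - c * ff i + ww i) = rsum (fun _ : 'I_N => M) + (- c) * rsum ff + rsum ww.
  rewrite -rsum_scal -!rsum_plus. apply: rsum_ext => i. lra.
rewrite E rsum_const in Hsum.
have Hw := Hpert X Y. rewrite -/ww -/rr in Hw.
have Hrf : rsum rr <= 4 / phi0 kappa * rsum ff.
  rewrite -rsum_scal. apply: rsum_le => i.
  have [H1 _] := @f_bounds kappa Hc _ Hm0 _ _ Heps HR0' (rr i) (vnorm_nonneg _).
  rewrite /ff.
  have H4 : 0 <= 4 / phi0 kappa by apply: Rdiv_le_0_compat; lra.
  have := Rmult_le_compat_l _ _ _ H4 H1.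
  have -> : 4 / phi0 kappa * (phi0 kappa * rr i / 4) = rr i by field; lra.
  done.
have Hr0 : 0 <= rsum rr by apply: rsum_nonneg => i; apply: vnorm_nonneg.
have Hf0 : 0 <= rsum ff.
  apply: rsum_nonneg => i.
  have [H1 _] := @f_bounds kappa Hc _ Hm0 _ _ Heps HR0' (rr i) (vnorm_nonneg _).
  have := vnorm_nonneg (vsub (X i) (Y i)). rewrite /ff. rewrite -/(rr i) => ?. nra.
have HLr : L * rsum rr <= c / 2 * rsum ff.
  case: (Rle_lt_dec L 0) => HL0.
  - have : L * rsum rr <= 0 by nra. have : 0 <= c / 2 * rsum ff by nra. lra.
  - have A : L * rsum rr <= L * (4 / phi0 kappa * rsum ff) by apply: Rmult_le_compat_l; lra.
    have B : L * (4 / phi0 kappa) <= c / 2.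
      rewrite /c.
      have H8 : 8 * L <= c0 kappa * sigma ^ 2 * phi0 kappa.
        have -> : c0 kappa * sigma ^ 2 * phi0 kappa = 8 * (c0 kappa * phi0 kappa * sigma ^ 2 / 8) by field.
        lra.
      have -> : L * (4 / phi0 kappa) = (8 * L) / phi0 kappa / 2 by field; lra.
      apply: Rmult_le_compat_r; first lra.
      apply/Rle_div_l => //.
    have : L * (4 / phi0 kappa) * rsum ff <= c / 2 * rsum ff by apply: Rmult_le_compat_r.
    lra.
change (m_delta sigma kappa delta) with M.
idtac.
lra.
Qed.
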